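(* Let $X$ be an HLC space, $R$ a commutative noetherian ring and $\mathcal{A}$ a sheaf of $R$-modules on $X$. Then the sequence $$0\to\mathcal{A}\to\mathcal{S}^0_{\mathrm{fg}}(X;\mathcal{A})\to\mathcal{S}^1_{\mathrm{fg}}(X;\mathcal{A})\to\mathcal{S}^2_{\mathrm{fg}}(X;\mathcal{A})\to\cdots$$ is exact.
   Context: $\mathcal{S}^n(X;\mathcal{A})$ is the sheaf of germs of $U\mapsto S^n(U;\mathcal{A}(U))$ (functions from singular $n$-simplices of $U$ to $\mathcal{A}(U)$, restriction via restricting simplices and $\mathcal{A}(U)\to\mathcal{A}(V)$), with singular coboundary; $\mathcal{S}^n_{\mathrm{fg}}(X;\mathcal{A})=\mathcal{S}^n(X;\mathcal{R})\otimes_R\mathcal{A}$ ($\mathcal{R}=R\times X$), identified with the subsheaf of germs of cochains whose values lie in a finitely generated submodule of $\mathcal{A}(U)$. The first map sends the germ of a section $s\in\mathcal{A}(U)$ to the germ of the constant $0$-cochain $u\mapsto s$. HLC: for every $x$, neighbourhood $U$ of $x$ and $n\ge0$ there is a neighbourhood $V\subseteq U$ of $x$ with $\tilde H_n(V;\mathbb{Z})\to\tilde H_n(U;\mathbb{Z})$ zero. *)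

(* Defs.v *)
From HB Require Import structures.
From mathcomp Require Import all_boot all_order all_algebra.
From mathcomp Require Import all_classical all_reals all_analysis.
From mathcomp Require Import Rstruct Rstruct_topology.

Set Implicit Arguments.
Unset Strict Implicit.
Unset Printing Implicit Defensive.

Import Order.TTheory GRing.Theory Num.Theory.
Local Open Scope classical_set_scope.
Local Open Scope ring_scope.

Notation RR := Rdefinitions.R.

Definition stdsimplex (n : nat) : set 'rV[RR]_n.+1 :=
  [set t | (forall j, 0 <= t 0 j) /\ \sum_(j < n.+1) t 0 j = 1].

Arguments stdsimplex n : clear implicits.

(* Delta^n as a topological space: subspace topology (initial topology of the
   inclusion) on the subtype. *)
Definition Delta (n : nat) := set_type (stdsimplex n).

(* i-th face row map R^{n+1} -> R^{n+2}: insert a 0 at coordinate i. *)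
Definition face_row (n : nat) (i : 'I_n.+2) (t : 'rV[RR]_n.+1) : 'rV[RR]_n.+2 :=
  \row_j (if unlift i j is Some k then t 0 k else 0).

Lemma face_row_simplex n (i : 'I_n.+2) t :
  stdsimplex n t -> stdsimplex n.+1 (face_row i t).
Proof.
move=> [t0 t1]; split.
  by move=> j; rewrite mxE; case: unlift.
rewrite (bigD1_ord i) //= mxE unlift_none add0r -t1.
by apply: eq_bigr => k _; rewrite mxE liftK.
Qed.

Definition face (n : nat) (i : 'I_n.+2) (t : Delta n) : Delta n.+1 :=
  exist _ (face_row i (set_val t))
    (mem_set (face_row_simplex i (set_mem (valP t)))).

Section Singular.
Variable X : topologicalType.

Definition singular (n : nat) (U : set X) (sigma : Delta n -> X) : Prop :=
  continuous sigma /\ (forall t, U (sigma t)).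

(* integral singular n-chains, as finite formal sums sum_k a_k sigma_k *)
Definition chain (n : nat) := seq (int * (Delta n -> X)).

Definition chain_in (n : nat) (U : set X) (c : chain n) : Prop :=
  List.Forall (fun p => singular U p.2) c.

Definition coef (n : nat) (c : chain n) (tau : Delta n -> X) : int :=
  \sum_(p <- c) (if `[< p.2 = tau >] then p.1 else 0).

(* equality of chains in the free abelian group on singular simplices *)
Definition chain_eq (n : nat) (c d : chain n) : Prop :=
  forall tau, coef c tau = coef d tau.

Definition bdry (n : nat) (c : chain n.+1) : chain n :=
  flatten [seq [seq (((-1) ^+ i * p.1)%R, p.2 \o @face n i) | i : 'I_n.+2 <- enum 'I_n.+2]
          | p : int * (Delta n.+1 -> X) <- c].

Definition augment (c : chain 0) : int := \sum_(p <- c) p.1.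

Definition reduced_cycle (n : nat) : chain n -> Prop :=
  match n as k return chain k -> Prop with
  | 0 => fun c => augment c = 0
  | m.+1 => fun c => chain_eq (bdry c) [::]
  end.

(* HLC: for every x, neighbourhood U of x and n >= 0 there is a neighbourhood
   V of x inside U such that  H~_n(V;Z) -> H~_n(U;Z)  is zero, i.e. every
   reduced n-cycle of V is a boundary in U. *)
Definition HLC : Prop :=
  forall (x : X) (U : set X), nbhs x U -> forall n : nat,
    exists V : set X, [/\ nbhs x V, V `<=` U &
      forall z : chain n, chain_in V z -> reduced_cycle z ->
        exists w : chain n.+1, chain_in U w /\ chain_eq (bdry w) z].


Definition ideal (R : comPzRingType) (I : set R) : Prop :=
  [/\ I 0, (forall a b, I a -> I b -> I (a + b)) &
      (forall r a, I a -> I (r * a))].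

Definition noetherian (R : comPzRingType) : Prop :=
  forall I : nat -> set R, (forall n, ideal (I n)) -> (forall n, I n `<=` I n.+1) ->
    exists N, forall n, (N <= n)%N -> I n = I N.

(* The module of sections and the restriction maps are given for all subsets /
   pairs of subsets; only their values on open sets and inclusions matter and
   only those are constrained by the axioms. *)
Unset Implicit Arguments.
Record sheaf (R : comPzRingType) := Sheaf {
  sec : set X -> lmodType R;
  res : forall U V : set X, sec U -> sec V;
  res_linear : forall U V, open U -> open V -> V `<=` U -> linear (res U V);
  res_id : forall U, open U -> forall s, res U U s = s;
  res_comp : forall U V W, open U -> open V -> open W -> W `<=` V -> V `<=` U ->
    forall s, res V W (res U V s) = res U W s;
  sheaf_local : forall (U : set X) (I : Type) (V : I -> set X),
    open U -> (forall i, open (V i)) -> \bigcup_i V i = U ->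
    forall s t : sec U, (forall i, res U (V i) s = res U (V i) t) -> s = t;
  sheaf_glue : forall (U : set X) (I : Type) (V : I -> set X),
    open U -> (forall i, open (V i)) -> \bigcup_i V i = U ->
    forall f : forall i, sec (V i),
      (forall i j, res (V i) (V i `&` V j) (f i) = res (V j) (V i `&` V j) (f j)) ->
      exists s : sec U, forall i, res U (V i) s = f i
}.
Set Implicit Arguments.
Arguments sec {R} s0 U.
Arguments res {R} s0 U V _.

Section Cochains.
Variables (R : comPzRingType) (A : sheaf R).

(* an element of  S^n(U; A(U)) : a function on singular n-simplices of U with
   values in A(U) (represented by a function on all maps Delta^n -> X; only its
   values on singular n-simplices of U are relevant, see below). *)
Definition cochain (n : nat) (U : set X) := (Delta n -> X) -> sec A U.

Definition cobdry (n : nat) (U : set X) (c : cochain n U) : cochain n.+1 U :=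
  fun sigma => \sum_(i < n.+2) ((-1) ^+ i : R) *: c (sigma \o face i).

Definition span (M : lmodType R) (s : seq M) : set M :=
  [set v | exists r : 'I_(size s) -> R, v = \sum_(i < size s) r i *: nth 0 s i].

Definition fg_cochain (n : nat) (U : set X) (c : cochain n U) : Prop :=
  exists s : seq (sec A U), forall sigma, @singular n U sigma -> span s (c sigma).

Definition germ_zero (n : nat) (U : set X) (x : X) (c : cochain n U) : Prop :=
  exists V : set X, [/\ open V, V x, V `<=` U &
    forall sigma, @singular n V sigma -> res A U V (c sigma) = 0].

End Cochains.
End Singular.
Arguments singular {X} n U sigma.
Arguments sec {X R} s0 U.
Arguments res {X R} s0 U V _.
Arguments cochain {X R} A n U.
Arguments cobdry {X R A n U} c _.
Arguments fg_cochain {X R A n U} c.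
Arguments germ_zero {X R} A {n} U x c.
Arguments HLC X : clear implicits.
Arguments noetherian R : clear implicits.

(* Main.v *)
Require Import Defs.
From HB Require Import structures.
From mathcomp Require Import all_boot all_order all_algebra.
From mathcomp Require Import all_classical all_reals all_analysis.
From mathcomp Require Import Rstruct Rstruct_topology.
Import Order.TTheory GRing.Theory Num.Theory.
Local Open Scope classical_set_scope.
Local Open Scope ring_scope.

From mathcomp Require Import zify.

Module PartA.


Definition FR (i : nat) (u : nat -> RR) (j : nat) : RR :=
  if (j < i)%N then u j else if j == i then 0 else u j.-1.

Lemma face_rowE n (i : 'I_n.+2) (t : 'rV[RR]_n.+1) (j : 'I_n.+2) :
  face_row i t 0 j = FR i (fun l => t 0 (inord l)) j.
Proof.
rewrite /face_row mxE /FR; case: unliftP => [k ->|->]; last by rewrite ltnn eqxx.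
rewrite /= /bump; case: (leqP i k) => hik /=.
  have -> : (k.+1 < i)%N = false by lia.
  have -> : (k.+1 == i) = false by apply/eqP; lia.
  by rewrite /= inord_val.
by rewrite add0n hik inord_val.
Qed.

Lemma FR_ext i u u' j N : (i <= N)%N -> (j <= N)%N ->
  (forall m, (m < N)%N -> u m = u' m) -> FR i u j = FR i u' j.
Proof.
move=> hi hj h; rewrite /FR; case: ifP => hji; first by apply: h; lia.
case: ifP => // hne; apply: h; move/eqP: hne; lia.
Qed.

Lemma FR_FR (i j : nat) u l : (j < i)%N ->
  FR i (FR j u) l = FR j (FR i.-1 u) l.
Proof.
move=> ji; rewrite /FR.
do ![case: ifPn => ?]; try done; first [ (exfalso; lia) | (congr u; lia) ].
Qed.

Lemma face_row2E n (i : 'I_n.+3) (j : 'I_n.+2) (t : 'rV[RR]_n.+1) (l : 'I_n.+3) :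
  face_row i (face_row j t) 0 l = FR i (FR j (fun m => t 0 (inord m))) l.
Proof.
rewrite face_rowE; apply: (@FR_ext _ _ _ _ n.+2) => //; try by rewrite -ltnS.
by move=> m hm; rewrite face_rowE inordK.
Qed.

Lemma face_face n (i : 'I_n.+3) (j : 'I_n.+2) (t : Delta n) : (j < i)%N ->
  face i (face j t) = face (inord j) (face (inord i.-1) t).
Proof.
move=> ji; apply: val_inj => /=.
have fE : forall m k (t' : Delta m), set_val (face k t') = face_row k (set_val t') by [].
rewrite !fE; apply/rowP => l.
rewrite !face_row2E.
rewrite FR_FR //.
rewrite !inordK //.
  by have := ltn_ord i; lia.
by have := ltn_ord j; lia.
Qed.

Section Cob.
Variable X : topologicalType.

Definition cob (M : zmodType) k (f : (Delta k -> X) -> M) : (Delta k.+1 -> X) -> M :=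
  fun s => \sum_(i < k.+2) f (s \o face i) *~ (-1)^+i.
Arguments cob {M k} f _.

Lemma tri_sum (M : zmodType) N (g : nat -> nat -> M) :
  (forall a b, (b < a <= N)%N -> g a b = - g b a.-1) ->
  \sum_(a < N.+1) \sum_(b < N) g a b = 0.
Proof.
move=> hg.
rewrite (eq_bigr (fun a : 'I_N.+1 => \sum_(b < N | (b < a)%N) g a b +
   \sum_(b < N | ~~ (b < a)%N) g a b)); last by move=> a _; rewrite (bigID (fun b : 'I_N => (b < a)%N)).
rewrite big_split /=.
have T2 : \sum_(a < N.+1) \sum_(b < N | ~~ (b < a)%N) g a b =
   - \sum_(b < N) \sum_(a < b.+1) g b.+1 a.
  rewrite -sumrN.
  rewrite (eq_bigr (fun a : 'I_N.+1 => \sum_(b < N) (if (a <= b)%N then - g b.+1 a else 0))); last first.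
    move=> a _; rewrite big_mkcond /=; apply: eq_bigr => b _.
    rewrite -leqNgt; case: ifP => // hab; rewrite (hg b.+1 a) ?opprK //.
    by have := ltn_ord b; lia.
  rewrite exchange_big /=; apply eq_bigr => b _.
  rewrite -sumrN (big_ord_widen N.+1 (fun a => - g b.+1 a)); last first.
    by rewrite ltnS ltnW.
  by rewrite [RHS]big_mkcond /=; apply: eq_bigr => a _; rewrite ltnS.
rewrite T2 big_ord_recl /= big_pred0 ?add0r; last by move=> b.
rewrite (eq_bigr (fun a : 'I_N => \sum_(b < a.+1) g a.+1 b)) ?subrr //.
move=> a _; rewrite (big_ord_widen N (g a.+1)) //.
Qed.

Lemma cobcob0 (M : zmodType) k (f : (Delta k -> X) -> M) (s : Delta k.+2 -> X) :
  cob (cob f) s = 0.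
Proof.
rewrite /cob.
pose g (a b : nat) := f (s \o face (inord a : 'I_k.+3) \o face (inord b : 'I_k.+2))
   *~ ((-1)^+(a + b)).
transitivity (\sum_(a < k.+3) \sum_(b < k.+2) g a b).
  apply: eq_bigr => a _; rewrite mulrz_suml; apply: eq_bigr => b _.
  by rewrite /g !inord_val -mulrzA exprD mulrC.
apply: tri_sum.
move=> [//|a] b /andP[ba aN].
rewrite /g; have -> : (s \o face (inord a.+1 : 'I_k.+3)) \o face (inord b : 'I_k.+2) =
   (s \o face (inord b : 'I_k.+3)) \o face (inord a.+1.-1 : 'I_k.+2).
  apply/funext => t /=; rewrite face_face; last by rewrite !inordK //; lia.
  by rewrite !inordK //; lia.
rewrite -mulrNz; congr (_ *~ _).
by rewrite /= addSn exprS addnC mulN1r.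
Qed.
End Cob.
Arguments cob {X M k} f _.

End PartA.
Import PartA.

Module PartB.


Lemma face_row_cont n (i : 'I_n.+2) : continuous (face_row i).
Proof.
move=> t A [P hP sub].
exists (fun a k => P a (lift i k)).
  by move=> a k; have := hP a (lift i k); rewrite /face_row mxE liftK (ord1 a).
move=> N hN; apply: sub => a j /=.
rewrite /face_row mxE; case: unliftP => [k ->|->].
  by have := hN a k; rewrite (ord1 a).
have := hP a i; rewrite /face_row mxE unlift_none.
exact: nbhs_singleton.
Qed.

Lemma face_cont n (i : 'I_n.+2) : continuous (face i).
Proof.
apply: (@continuous_comp_initial _ _ _ set_val).
have -> : set_val \o face i = face_row i \o set_val by [].
move=> t; apply: continuous_comp; last exact: face_row_cont.
exact: initial_continuous.
Qed.

End PartB.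
Import PartB.

Module PartC.

Set Implicit Arguments.
Unset Strict Implicit.

Section Chains.
Variable X : topologicalType.

Definition ev (M : zmodType) k (f : (Delta k -> X) -> M) (d : chain X k) : M :=
  \sum_(p <- d) f p.2 *~ p.1.
Arguments ev {M k} f d.

Definition negc k (d : chain X k) : chain X k := [seq (- p.1, p.2) | p <- d].
Arguments negc {k} d.

Definition Dlift k (E : (Delta k -> X) -> chain X k.+1) (d : chain X k) : chain X k.+1 :=
  flatten [seq [seq (p.1 * q.1, q.2) | q <- E p.2] | p <- d].
Arguments Dlift {k} E d.

Lemma ev_nil (M : zmodType) k (f : (Delta k -> X) -> M) : ev f [::] = 0.
Proof. by rewrite /ev big_nil. Qed.

Lemma ev_cons (M : zmodType) k (f : (Delta k -> X) -> M) p d :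
  ev f (p :: d) = f p.2 *~ p.1 + ev f d.
Proof. by rewrite /ev big_cons. Qed.

Lemma ev_cat (M : zmodType) k (f : (Delta k -> X) -> M) d1 d2 :
  ev f (d1 ++ d2) = ev f d1 + ev f d2.
Proof. by rewrite /ev big_cat. Qed.

Lemma ev_neg (M : zmodType) k (f : (Delta k -> X) -> M) d :
  ev f (negc d) = - ev f d.
Proof. by rewrite /ev big_map -sumrN; apply: eq_bigr => p _; rewrite mulrNz. Qed.

Lemma ev_Dlift (M : zmodType) k (f : (Delta k.+1 -> X) -> M) E d :
  ev f (Dlift E d) = ev (fun s => ev f (E s)) d.
Proof.
rewrite /ev /Dlift big_flatten big_map /=; apply: eq_bigr => p _.
rewrite big_map mulrz_suml; apply: eq_bigr => q _ /=.
by rewrite mulrzA_C.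
Qed.

Lemma ev_bdry (M : zmodType) k (f : (Delta k -> X) -> M) d :
  ev f (bdry d) = ev (cob f) d.
Proof.
rewrite /ev /bdry big_flatten big_map /=; apply: eq_bigr => p _.
rewrite big_map /cob mulrz_suml big_enum /=; apply: eq_bigr => i _ /=.
by rewrite mulrzA.
Qed.

Lemma ev1 (M : zmodType) k (f : (Delta k -> X) -> M) s :
  ev f [:: (1, s)] = f s.
Proof. by rewrite ev_cons ev_nil addr0. Qed.

Definition ind k (tau : Delta k -> X) (s : Delta k -> X) : int :=
  if `[< s = tau >] then 1 else 0.
Arguments ind {k} tau s.

Lemma ev_ind k (tau : Delta k -> X) d : ev (ind tau) d = coef d tau.
Proof.
rewrite /ev /coef; apply: eq_bigr => p _; rewrite /ind.
by case: ifP => _; rewrite ?mul0rz // intz.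
Qed.

Lemma coef_cat k (d1 d2 : chain X k) tau : coef (d1 ++ d2) tau = coef d1 tau + coef d2 tau.
Proof. by rewrite /coef big_cat. Qed.

Lemma coef_neg k (d : chain X k) tau : coef (negc d) tau = - coef d tau.
Proof.
rewrite /coef big_map -sumrN; apply: eq_bigr => p _ /=.
by case: ifP; rewrite ?oppr0.
Qed.

Lemma ev0 (M : zmodType) k (f : (Delta k -> X) -> M) (e : chain X k) :
  (forall tau, coef e tau = 0) -> ev f e = 0.
Proof.
move: {2}(size e) (leqnn (size e)) => m; elim: m e => [|m IH] [|p e] //=;
  try by rewrite ev_nil.
move=> hs hc.
pose P := fun q : int * (Delta k -> X) => `[< q.2 = p.2 >].
rewrite /ev (bigID P) /=.
have -> : \sum_(i <- p :: e | P i) f i.2 *~ i.1 = f p.2 *~ coef (p :: e) p.2.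
  rewrite /coef mulrz_sumr big_mkcond /=; apply: eq_bigr => q _.
  rewrite /P; case: ifP => [/asboolP ->|]; by rewrite ?mulr0z.
rewrite hc mulr0z add0r.
rewrite -big_filter; change (ev f (seq.filter (predC P) (p :: e)) = 0); apply: IH.
  rewrite /= /P (asboolT (erefl p.2)) /= size_filter.
  by apply: leq_trans (count_size _ _) _.
move=> tau; rewrite /coef big_filter /=.
case: (pselect (tau = p.2)) => [->|ntau].
  rewrite big1 // => q; rewrite /P /= => /negP.
  by case: asboolP => // ->; rewrite (asboolT (erefl p.2)).
have := hc tau; rewrite /coef (bigID P) /= [X in X + _ = _]big1 ?add0r //.
by move=> q /asboolP ->; rewrite asboolF // => h; apply: ntau.
Qed.

Lemma ev_chain_eq (M : zmodType) k (f : (Delta k -> X) -> M) (d1 d2 : chain X k) :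
  chain_eq d1 d2 -> ev f d1 = ev f d2.
Proof.
move=> h; apply/eqP; rewrite -subr_eq0 -ev_neg -ev_cat; apply/eqP; apply: ev0.
by move=> tau; rewrite coef_cat coef_neg h subrr.
Qed.

End Chains.

End PartC.
Import PartC.

Module PartD.

Set Implicit Arguments.
Unset Strict Implicit.

Arguments ev {X M k} f d.
Arguments negc {X k} d.
Arguments Dlift {X k} E d.
Arguments ind {X k} tau s.

Section Sing.
Variable X : topologicalType.

Lemma chain_in_cons k (U : set X) (p : int * (Delta k -> X)) d :
  chain_in U (p :: d) <-> singular k U p.2 /\ chain_in U d.
Proof.
split; first by move=> h; split; [exact: (List.Forall_inv h) | exact: (List.Forall_inv_tail h)].
by move=> [h1 h2]; constructor.
Qed.

Lemma chain_in_nil k (U : set X) : chain_in U ([::] : chain X k).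
Proof. by constructor. Qed.

Lemma chain_in_cat k (U : set X) (d1 d2 : chain X k) :
  chain_in U d1 -> chain_in U d2 -> chain_in U (d1 ++ d2).
Proof.
elim: d1 => // p d IH /chain_in_cons [h1 h2] h3 /=.
by apply/chain_in_cons; split => //; apply: IH.
Qed.

Lemma chain_in_neg k (U : set X) (d : chain X k) : chain_in U d -> chain_in U (negc d).
Proof.
elim: d => // p d IH /chain_in_cons [h1 h2] /=.
by apply/chain_in_cons; split => //; apply: IH.
Qed.

Lemma chain_in_map k (U : set X) (d : chain X k) (g : int -> int) :
  chain_in U d -> chain_in U [seq (g q.1, q.2) | q <- d].
Proof.
elim: d => // p d IH /chain_in_cons [h1 h2] /=.
by apply/chain_in_cons; split => //; apply: IH.
Qed.

Lemma chain_in_Dlift k (W Y : set X) (E : (Delta k -> X) -> chain X k.+1) d :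
  chain_in W d -> (forall s, singular k W s -> chain_in Y (E s)) ->
  chain_in Y (Dlift E d).
Proof.
move=> hd hE; elim: d hd => [|p d IH] /=; first by move=> _; exact: chain_in_nil.
move=> /chain_in_cons [h1 h2]; rewrite /Dlift /=; apply: chain_in_cat.
  exact/chain_in_map/hE.
exact: IH.
Qed.

Lemma chain_in_mono k (U V : set X) (d : chain X k) :
  U `<=` V -> chain_in U d -> chain_in V d.
Proof.
move=> UV; elim: d => [|p d IH]; first by constructor.
move=> /chain_in_cons [[h1 h1'] h2].
apply/chain_in_cons; split; last exact: IH.
by split => // t; apply: UV.
Qed.

Lemma singular_face k (W : set X) (s : Delta k.+1 -> X) (i : 'I_k.+2) :
  singular k.+1 W s -> singular k W (s \o face i).
Proof.
move=> [hc hW]; split => [t|t]; last exact: hW.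
by apply: continuous_comp; [exact: face_cont | exact: hc].
Qed.

Lemma singular_mono k (U V : set X) (s : Delta k -> X) :
  U `<=` V -> singular k U s -> singular k V s.
Proof. by move=> UV [h1 h2]; split => // t; apply: UV. Qed.

Lemma singular_cst k (W : set X) (x : X) : W x -> singular k W (fun _ => x).
Proof. by move=> Wx; split => // t; exact: cst_continuous. Qed.

Lemma chain_in_bdry1 k (W : set X) (s : Delta k.+1 -> X) :
  singular k.+1 W s -> chain_in W (bdry [:: (1, s)]).
Proof.
move=> hs; rewrite /bdry /= cats0.
elim: (enum 'I_k.+2) => [|i r IH] /=; first exact: chain_in_nil.
by apply/chain_in_cons; split => //; exact: singular_face.
Qed.

Lemma ev_ext (M : zmodType) k (V : set X) (f g : (Delta k -> X) -> M) d :
  chain_in V d -> (forall s, singular k V s -> f s = g s) -> ev f d = ev g d.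
Proof.
move=> hd h; elim: d hd => [|p d IH]; first by rewrite !ev_nil.
by move=> /chain_in_cons [h1 h2]; rewrite !ev_cons h // IH.
Qed.

Lemma ev_zero (M : zmodType) k (V : set X) (f : (Delta k -> X) -> M) d :
  chain_in V d -> (forall s, singular k V s -> f s = 0) -> ev f d = 0.
Proof.
move=> hd h; rewrite (@ev_ext M k V f (fun _ => 0) d hd h).
by rewrite /ev big1 // => p _; rewrite mul0rz.
Qed.

Lemma cob_ext (M : zmodType) k (W : set X) (f g : (Delta k -> X) -> M) s :
  singular k.+1 W s -> (forall s', singular k W s' -> f s' = g s') ->
  cob f s = cob g s.
Proof.
move=> hs h; rewrite /cob; apply: eq_bigr => i _.
by rewrite h //; exact: singular_face.
Qed.

Lemma cobB (M : zmodType) k (f g : (Delta k -> X) -> M) s :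
  cob (fun s' => f s' - g s') s = cob f s - cob g s.
Proof. by rewrite /cob -sumrB; apply: eq_bigr => i _; rewrite mulrzBl. Qed.

Lemma cob_cst (M : zmodType) (m : M) (s : Delta 1 -> X) :
  cob (fun _ : Delta 0 -> X => m) s = 0.
Proof.
rewrite /cob big_ord_recl big_ord_recl big_ord0 /= expr0 expr1.
by rewrite addr0 mulrN1z subrr.
Qed.
End Sing.

End PartD.
Import PartD.

Module PartE.


Arguments ev {X M k} f d.
Arguments negc {X k} d.
Arguments Dlift {X k} E d.
Arguments ind {X k} tau s.
Arguments ev_chain_eq {X M k} f {d1 d2} _.

Section Htpy.
Variables (X : topologicalType) (x : X) (hX : HLC X).

Definition Good k (W : set X) (E : (Delta k -> X) -> chain X k.+1)
  (Q : forall M : zmodType, ((Delta k -> X) -> M) -> (Delta k -> X) -> M) : Prop :=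
  (forall (M : zmodType) f s, singular k.+1 W s -> cob (Q M f) s = 0) /\
  (forall (M : zmodType) f s, singular k W s -> ev f (bdry (E s)) = f s - Q M f s).

Definition Main k := forall Y : set X, nbhs x Y -> exists W : set X,
  [/\ nbhs x W, W `<=` Y & exists E Q, Good k W E Q /\
     (forall s, singular k W s -> chain_in Y (E s))].

Lemma base (Y : set X) : nbhs x Y -> exists W : set X,
  [/\ nbhs x W, W `<=` Y & exists E : (Delta 0 -> X) -> chain X 1,
    (forall s, singular 0 W s -> chain_in Y (E s)) /\
    forall (M : zmodType) (f : (Delta 0 -> X) -> M) s, singular 0 W s ->
      ev f (bdry (E s)) = f s - f (fun _ => x)].
Proof.
move=> hY; have [Y1 [hY1 sub1 hc]] := hX x Y hY 0.
exists Y1; split => //.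
have : forall s : Delta 0 -> X, exists w : chain X 1, singular 0 Y1 s ->
   chain_in Y w /\ chain_eq (bdry w) [:: (1, s); (-1, fun _ => x)].
  move=> s; case: (pselect (singular 0 Y1 s)) => hs; last by exists [::].
  have [] := hc [:: (1, s); (-1, fun _ => x)].
  - apply/chain_in_cons; split => //; apply/chain_in_cons; split; last exact: chain_in_nil.
    by apply: singular_cst; exact: nbhs_singleton.
  - by rewrite /= /augment !big_cons big_nil /= addr0 subrr.
  by move=> w hw; exists w.
case/choice => E hE; exists E; split.
  by move=> s hs; case: (hE s hs).
move=> M f s hs; case: (hE s hs) => _ heq.
rewrite (ev_chain_eq f heq) !ev_cons ev_nil /=.
by rewrite mulr1z mulrN1z addr0.
Qed.

Lemma step k : Main k -> forall Y : set X, nbhs x Y -> exists W : set X,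
  [/\ nbhs x W, W `<=` Y & exists (E : (Delta k -> X) -> chain X k.+1)
    (E' : (Delta k.+1 -> X) -> chain X k.+2),
    [/\ (forall s, singular k W s -> chain_in Y (E s)),
        (forall s, singular k.+1 W s -> chain_in Y (E' s)) &
        forall (M : zmodType) (f : (Delta k.+1 -> X) -> M) s, singular k.+1 W s ->
          ev f (bdry (E' s)) = f s - cob (fun s' => ev f (E s')) s]].
Proof.
move=> hM Y hY; have [Y1 [hY1 sub1 hc]] := hX x Y hY k.+1.
have [W [hW subW [E [Q [[hQ1 hQ2] hE]]]]] := hM Y1 hY1.
exists W; split => //; first by move=> t /subW /sub1.
pose z s := (1, s) :: negc (Dlift E (bdry [:: (1, s)])).
have : forall s, exists w : chain X k.+2, singular k.+1 W s ->
   chain_in Y w /\ chain_eq (bdry w) (z s).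
  move=> s; case: (pselect (singular k.+1 W s)) => hs; last by exists [::].
  have [] := hc (z s).
  - apply/chain_in_cons; split; first exact: (singular_mono subW hs).
    apply: chain_in_neg; apply: chain_in_Dlift hE.
    exact: chain_in_bdry1.
  - move=> tau; rewrite -!ev_ind ev_nil ev_bdry /z ev_cons ev_neg ev_Dlift.
    rewrite ev_bdry ev1 mulr1z /=.
    have -> : cob (fun s0 => ev (cob (ind tau)) (E s0)) s = cob (ind tau) s - 0.
      rewrite -(hQ1 _ (ind tau) s hs) -cobB; apply: (cob_ext hs).
      by move=> s' hs'; rewrite -ev_bdry hQ2.
    by rewrite subr0 subrr.
  by move=> w hw; exists w.
case/choice => E' hE'; exists E, E'; split.
- by move=> s hs; apply: chain_in_mono sub1 _; exact: hE.
- by move=> s hs; case: (hE' s hs).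
move=> M f s hs; case: (hE' s hs) => _ heq.
rewrite (ev_chain_eq f heq) /z ev_cons ev_neg ev_Dlift ev_bdry ev1 /=.
by rewrite mulr1z.
Qed.

Lemma main k : Main k.
Proof.
elim: k => [|k IH] Y hY.
  have [W [hW sub [E [hE hrel]]]] := base Y hY.
  exists W; split => //; exists E, (fun M f _ => f (fun _ => x)); split => //.
  split => // M f s _; exact: cob_cst.
have [W [hW sub [E [E' [hE hE' hrel]]]]] := step k IH Y hY.
exists W; split => //; exists E', (fun M f s => cob (fun s' => ev f (E s')) s).
split => //; split => // M f s _; exact: cobcob0.
Qed.

End Htpy.

End PartE.
Import PartE.

Module PartF.

Set Implicit Arguments.
Unset Strict Implicit.

Section Lin.
Variables (R : comPzRingType) (M N : lmodType R) (h : M -> N).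
Hypothesis hl : linear h.

Lemma linD u v : h (u + v) = h u + h v.
Proof. by have := hl 1 u v; rewrite !scale1r. Qed.

Lemma lin0 : h 0 = 0.
Proof.
by apply: (@addrI _ (h 0)); rewrite [RHS]addr0 -linD addr0.
Qed.

Lemma linZ a u : h (a *: u) = a *: h u.
Proof. by have := hl a u 0; rewrite !addr0 lin0 addr0. Qed.

Lemma linMz u (z : int) : h (u *~ z) = h u *~ z.
Proof. by rewrite -!scaler_int linZ. Qed.

Lemma lin_sum I (r : seq I) (F : I -> M) :
  h (\sum_(i <- r) F i) = \sum_(i <- r) h (F i).
Proof.
elim: r => [|a r IH]; first by rewrite !big_nil lin0.
by rewrite !big_cons linD IH.
Qed.
End Lin.

Section Span.
Variables (R : comPzRingType) (M : lmodType R).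

Definition spanN (s : seq M) (v : M) :=
  exists r : nat -> R, v = \sum_(i < size s) r i *: nth 0 s i.

Lemma span_spanN s v : Defs.span s v -> spanN s v.
Proof.
move=> [r ->]; exists (fun n => odflt 0 (omap r (insub n))).
by apply: eq_bigr => i _; rewrite valK.
Qed.

Lemma spanN_span s v : spanN s v -> Defs.span s v.
Proof. by move=> [r ->]; exists (fun i => r i). Qed.

Lemma spanN0 s : spanN s 0.
Proof. by exists (fun _ => 0); rewrite big1 // => i _; rewrite scale0r. Qed.

Lemma spanND s u v : spanN s u -> spanN s v -> spanN s (u + v).
Proof.
move=> [r1 ->] [r2 ->]; exists (fun n => r1 n + r2 n).
by rewrite -big_split; apply: eq_bigr => i _; rewrite scalerDl.
Qed.

Lemma spanNMz s u (z : int) : spanN s u -> spanN s (u *~ z).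
Proof.
move=> [r ->]; exists (fun n => z%:~R * r n).
rewrite -scaler_int scaler_sumr; apply: eq_bigr => i _; by rewrite scalerA.
Qed.

End Span.

Lemma spanN_map (R : comPzRingType) (M N : lmodType R) (h : M -> N) s v : linear h ->
  spanN s v -> spanN (map h s) (h v).
Proof.
move=> hl [r ->]; exists r; rewrite (lin_sum hl) size_map.
by apply: eq_bigr => i _; rewrite (linZ hl) (nth_map 0) ?(lin0 hl).
Qed.


Section Final.
Variables (X : topologicalType) (R : comPzRingType) (A : sheaf X R).


Lemma signZ (V : lmodType R) (v : V) (i : nat) : ((-1) ^+ i : R) *: v = v *~ ((-1) ^+ i).
Proof. by rewrite -scaler_int rmorphXn rmorphN rmorph1. Qed.

Lemma cobdry_cob n U (c : cochain A n U) s : cobdry c s = cob c s.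
Proof. by rewrite /cobdry /cob; apply: eq_bigr => i _; rewrite signZ. Qed.


Lemma lin_cob (M N : lmodType R) (h : M -> N) k (f : (Delta k -> X) -> M) s :
  linear h -> h (cob f s) = cob (fun t => h (f t)) s.
Proof.
move=> hl; rewrite /cob lin_sum //; apply: eq_bigr => i _.
by rewrite linMz.
Qed.

Lemma spanN_ev (M : lmodType R) k (U : set X) (s0 : seq M) (f : (Delta k -> X) -> M) d :
  chain_in U d -> (forall t, singular k U t -> spanN s0 (f t)) -> spanN s0 (ev f d).
Proof.
move=> hd h; elim: d hd => [|p d IH]; first by rewrite ev_nil => _; exact: spanN0.
move=> /chain_in_cons [h1 h2]; rewrite ev_cons; apply: spanND; last exact: IH.
by apply: spanNMz; exact: h.
Qed.

End Final.

End PartF.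
Import PartF.

Theorem lemma4p4 (X : topologicalType) (R : comPzRingType) (A : sheaf X R) :
  HLC X -> noetherian R ->
  [/\
    (forall (U : set X) (x : X) (s : sec A U), open U -> U x ->
       germ_zero A U x (fun _ : Delta 0 -> X => s) ->
       exists V : set X, [/\ open V, V x, V `<=` U & res A U V s = 0]),
    (forall (U : set X) (x : X) (c : cochain A 0 U), open U -> U x ->
       fg_cochain c ->
       ((germ_zero A U x (cobdry c) <->
        exists V : set X, [/\ open V, V x, V `<=` U &
          exists s : sec A V, forall sigma, singular 0 V sigma ->
            res A U V (c sigma) = s]))) &
    (forall (n : nat) (U : set X) (x : X) (c : cochain A n.+1 U), open U -> U x ->
       fg_cochain c ->
       ((germ_zero A U x (cobdry c) <->
        exists V : set X, [/\ open V, V x, V `<=` U &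
          exists b : cochain A n V, fg_cochain b /\
            forall sigma, singular n.+1 V sigma -> cobdry b sigma = res A U V (c sigma)])))].
Proof.
move=> hX _.
have rescob : forall (U V : set X) n (c : cochain A n U) s, open U -> open V -> V `<=` U ->
    res A U V (cobdry c s) = cob (fun t => res A U V (c t)) s.
  move=> U V n c s hU hV hVU; rewrite cobdry_cob; apply: lin_cob.
  exact: res_linear.
split.
- move=> U x s hU hUx [V [hV hVx hVU hz]]; exists V; split => //.
  exact: (hz _ (@singular_cst X 0 V x hVx)).
- move=> U x c hU hUx hfg; split.
  + move=> [V [hV hVx hVU hz]].
    have hVn : nbhs x V by apply: open_nbhs_nbhs.
    have [W [hW hWV [E [hE hrel]]]] := @base X x hX V hVn.
    pose W' := interior W.
    have hW'W : W' `<=` W by apply: interior_subset.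
    have hW'o : open W' by apply: open_interior.
    have hW'V : W' `<=` V by move=> t /hW'W /hWV.
    exists W'; split => //; first by move=> t /hW'V /hVU.
    exists (res A V W' (res A U V (c (fun _ => x)))) => sigma hsig.
    have hsW : singular 0 W sigma by apply: singular_mono hW'W hsig.
    have := hrel _ (fun t => res A U V (c t)) sigma hsW.
    rewrite ev_bdry (ev_zero (V := V)); first last.
    * by move=> t ht; rewrite -rescob // hz.
    * exact: hE.
    move/eqP; rewrite eq_sym subr_eq0 => /eqP <-.
    by rewrite res_comp.
  + move=> [V [hV hVx hVU [s0 hs0]]]; exists V; split => // sigma hsig.
    rewrite rescob // /cob big_ord_recl big_ord_recl big_ord0 /=.
    rewrite !hs0; try by apply: singular_face.
    by rewrite expr0 expr1 mulr1z mulrN1z addr0 subrr.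
- move=> n U x c hU hUx hfg; split.
  + move=> [V [hV hVx hVU hz]].
    have hVn : nbhs x V by apply: open_nbhs_nbhs.
    have [W [hW hWV [E [E' [hE hE' hrel]]]]] := @step X x hX n (@main X x hX n) V hVn.
    pose W' := interior W.
    have hW'W : W' `<=` W by apply: interior_subset.
    have hW'o : open W' by apply: open_interior.
    have hW'V : W' `<=` V by move=> t /hW'W /hWV.
    exists W'; split => //; first by move=> t /hW'V /hVU.
    pose cV t := res A U V (c t).
    exists (fun t => res A V W' (ev cV (E t))); split.
    * have [s0 hs0] := hfg.
      exists [seq res A V W' i | i <- [seq res A U V i | i <- s0]] => tau htau.
      apply: spanN_span; apply: spanN_map; first exact: res_linear.
      apply: (spanN_ev (U := V)); first by apply: hE; apply: singular_mono hW'W htau.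
      move=> t ht; apply: spanN_map; first exact: res_linear.
      by apply: span_spanN; apply: hs0; apply: singular_mono hVU ht.
    move=> sigma hsig.
    have hsW : singular n.+1 W sigma by apply: singular_mono hW'W hsig.
    rewrite cobdry_cob -lin_cob; last exact: res_linear.
    have := hrel _ cV sigma hsW.
    rewrite ev_bdry (ev_zero (V := V)); first last.
    * by move=> t ht; rewrite -rescob // hz.
    * exact: hE'.
    move/eqP; rewrite eq_sym subr_eq0 => /eqP <-.
    by rewrite /cV res_comp.
  + move=> [V [hV hVx hVU [b [hbfg hb]]]]; exists V; split => // sigma hsig.
    rewrite rescob //.
    rewrite (cob_ext (W := V) (g := cob b) hsig); first exact: cobcob0.
    by move=> t ht; rewrite -hb // cobdry_cob.
Qed.
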